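(* Let $H$ and $K$ be $2$-connected cubic graphs, where $H$ is a snark with $\pi(H)\ge 5$ and $K$ is a $3$-edge-colourable quasi-bipartite graph with a bipartising set $U$. Let $G=H\oplus_3 K$ be a $3$-sum with distinguished vertices $u\in V(H)$ and $v\in V(K)$, where $\{v\}$ is a component of $K-U$ (so $v$ forms a trivial component of the quasi-partite set of $K$). Then: (i) $\pi(G)\ge 5$; (ii) $G$ is quasi-bipartite with bipartising set $U$ (inherited from $K$), and $H-u$ is an element of the corresponding quasi-partite set of $G$, replacing $\{v\}$.
   Context: Graphs are finite; loops and multiple edges are allowed. A snark is a $2$-connected cubic graph with no proper $3$-edge-colouring. The perfect matching index $\pi(G)$ is the smallest number of perfect matchings of $G$ whose union is $E(G)$. A $2$-connected cubic graph $K$ is quasi-bipartite if it contains an independent vertex set $U$ with $|U|\ge 2$ such that contracting each component of $K-U$ to a vertex yields a bipartite cubic graph (possibly with multiple edges) with partite sets $U$ and the set of contracted vertices; $U$ is a bipartising set and the set of components of $K-U$ is the quasi-partite set. A $3$-sum $H\oplus_3 K$ with distinguished vertices $u,v$ deletes $u$ and $v$ and joins the three dangling edge-ends formerly at $u$ bijectively to the three formerly at $v$. *)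

(* Defs.v *)
(* Finite multigraphs (loops and parallel edges allowed). *)
From mathcomp Require Import all_boot.
Set Implicit Arguments. Unset Strict Implicit. Unset Printing Implicit Defensive.

(* A finite multigraph: vertex type, edge type, and the two ends of each
   edge (orientation is irrelevant; a loop has src e = tgt e). *)
Record mgraph := MGraph {
  vert : finType;
  edge : finType;
  src : edge -> vert;
  tgt : edge -> vert }.

Section Basic.
Variable G : mgraph.

Definition incident (w : vert G) (e : edge G) : bool := (src e == w) || (tgt e == w).

(* degree: a loop counts twice *)
Definition deg (w : vert G) : nat :=
  #|[set e : edge G | src e == w]| + #|[set e : edge G | tgt e == w]|.

Definition cubic : Prop := forall w : vert G, deg w = 3.

Definition adj : rel (vert G) :=
  [rel x y | [exists e : edge G,
     ((src e == x) && (tgt e == y)) || ((src e == y) && (tgt e == x))]].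

Definition connected : Prop :=
  (exists x : vert G, True) /\ forall x y : vert G, connect adj x y.

Definition del_adj (w : vert G) : rel (vert G) :=
  [rel a b | (a != w) && (b != w) && adj a b].

Definition two_connected : Prop :=
  [/\ 3 <= #|vert G|, connected &
      forall w x y : vert G, x != w -> y != w -> connect (del_adj w) x y].

Definition perfect_matching (M : {set edge G}) : Prop :=
  (forall e : edge G, e \in M -> src e != tgt e) /\
  (forall x : vert G, #|[set e in M | incident x e]| = 1).

(* pmi_ge n  <->  pi(G) >= n  (with pi(G) = infinity if E(G) is not a
   union of perfect matchings) *)
Definition pmi_ge (n : nat) : Prop :=
  forall (k : nat) (Ms : 'I_k -> {set edge G}),
    (forall i, perfect_matching (Ms i)) ->
    (forall e : edge G, exists i, e \in Ms i) ->
    n <= k.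

Definition share_end (e f : edge G) : bool :=
  [|| src e == src f, src e == tgt f, tgt e == src f | tgt e == tgt f].

(* proper 3-edge-colouring (a loop is adjacent to itself, so none allowed) *)
Definition three_edge_colourable : Prop :=
  exists c : edge G -> 'I_3,
    (forall e : edge G, src e != tgt e) /\
    (forall e f, e != f -> share_end e f -> c e != c f).

Definition snark : Prop := [/\ two_connected, cubic & ~ three_edge_colourable].

Section QB.
Variable U : {set vert G}.

Definition independent : Prop := forall e : edge G, ~~ ((src e \in U) && (tgt e \in U)).

Definition radj : rel (vert G) := [rel a b | (a \notin U) && (b \notin U) && adj a b].

Definition comp (x : vert G) : {set vert G} := [set y | (y \notin U) && connect radj x y].

Definition QP : {set {set vert G}} := [set comp x | x in ~: U].

Definition SU : {set {set vert G}} := [set [set x] | x in U].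

Definition blocks : {set {set vert G}} := SU :|: QP.

Definition block_of (x : vert G) : {set vert G} := if x \in U then [set x] else comp x.

Lemma block_of_in x : block_of x \in blocks.
Proof.
rewrite /block_of /blocks; case: ifP => xU; apply/setUP.
  by left; apply/imsetP; exists x.
by right; apply/imsetP; exists x => //; rewrite in_setC xU.
Qed.

Definition cvert : finType := {B : {set vert G} | B \in blocks}.
(* edges inside a component are contracted away *)
Definition cedge : finType := {e : edge G | block_of (src e) != block_of (tgt e)}.
Definition csrc (e : cedge) : cvert := exist _ (block_of (src (val e))) (block_of_in _).
Definition ctgt (e : cedge) : cvert := exist _ (block_of (tgt (val e))) (block_of_in _).

Definition contraction : mgraph := MGraph csrc ctgt.

Definition bipartite_parts : Prop :=
  forall e : edge contraction,
    ((val (src e) \in SU) && (val (tgt e) \in QP)) ||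
    ((val (src e) \in QP) && (val (tgt e) \in SU)).

End QB.

End Basic.

Definition quasi_bipartite_with (G : mgraph) (U : {set vert G}) : Prop :=
  [/\ two_connected G, cubic G, independent U, 2 <= #|U| &
      cubic (contraction U) /\ bipartite_parts U].

Definition no_loop_at (G : mgraph) (w : vert G) : Prop :=
  forall e : edge G, ~~ ((src e == w) && (tgt e == w)).

Definition other (G : mgraph) (w : vert G) (e : edge G) : vert G :=
  if src e == w then tgt e else src e.

Lemma other_ne (G : mgraph) (w : vert G) (h : no_loop_at w) (e : edge G) :
  incident w e -> other w e != w.
Proof.
rewrite /other /incident; case: ifP => [/eqP s _ | sn /= ht].
  by apply/negP => /eqP t; move: (h e); rewrite s t eqxx.
by rewrite sn.
Qed.

Lemma src_ne (G : mgraph) (w : vert G) (e : edge G) : ~~ incident w e -> src e != w.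
Proof. by rewrite /incident negb_or => /andP[]. Qed.

Lemma tgt_ne (G : mgraph) (w : vert G) (e : edge G) : ~~ incident w e -> tgt e != w.
Proof. by rewrite /incident negb_or => /andP[]. Qed.

Section Sum3.
Variables (H K : mgraph) (u : vert H) (v : vert K).
Hypotheses (hu : no_loop_at u) (hv : no_loop_at v).

(* dangling edges at u in H and at v in K (no loops, so edge-ends = edges) *)
Definition dang_H : finType := {e : edge H | incident u e}.
Definition dang_K : finType := {f : edge K | incident v f}.
Variable sigma : dang_H -> dang_K.  (* the bijection joining dangling ends *)

Definition sv : finType := ({x : vert H | x != u} + {y : vert K | y != v})%type.
Definition se : finType :=
  ({e : edge H | ~~ incident u e} + {f : edge K | ~~ incident v f} + dang_H)%type.

Definition s_src (e : se) : sv :=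
  match e with
  | inl (inl e) => inl (exist _ (src (val e)) (src_ne (valP e)))
  | inl (inr f) => inr (exist _ (src (val f)) (src_ne (valP f)))
  | inr d => inl (exist _ (other u (val d)) (other_ne hu (valP d)))
  end.

Definition s_tgt (e : se) : sv :=
  match e with
  | inl (inl e) => inl (exist _ (tgt (val e)) (tgt_ne (valP e)))
  | inl (inr f) => inr (exist _ (tgt (val f)) (tgt_ne (valP f)))
  | inr d => inr (exist _ (other v (val (sigma d))) (other_ne hv (valP (sigma d))))
  end.

(* H (+)_3 K : delete u and v, join dangling ends via sigma *)
Definition sum3 : mgraph := MGraph s_src s_tgt.

Definition lift_set_K (S : {set vert K}) : {set vert sum3} :=
  [set x : vert sum3 | if x is inr y then val y \in S else false].
Definition H_side : {set vert sum3} :=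
  [set x : vert sum3 | if x is inl _ then true else false].
End Sum3.

Arguments cubic : clear implicits.
Arguments connected : clear implicits.
Arguments two_connected : clear implicits.
Arguments pmi_ge : clear implicits.
Arguments three_edge_colourable : clear implicits.
Arguments snark : clear implicits.

(* Main.v *)
Require Import Defs.
From mathcomp Require Import all_boot zify.
From Stdlib Require Import Lia.
Set Implicit Arguments. Unset Strict Implicit. Unset Printing Implicit Defensive.

Lemma big_sig_nat (T : finType) (P : pred T) (F : T -> nat) :
  \sum_(x : {x | P x}) F (val x) = \sum_(x | P x) F x.
Proof.
rewrite [RHS](reindex_omap (val : {x | P x} -> T) insub); last first.
  by move=> i Pi; rewrite insubT.
by apply: eq_bigl=> -[i iA]/=; rewrite insubT iA eqxx.
Qed.

Lemma card_set_sum (T : finType) (P : pred T) : #|[set x | P x]| = \sum_x P x.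
Proof.
rewrite -sum1_card big_mkcond /=; apply: eq_bigr => x _; rewrite inE; by case: (P x).
Qed.

Lemma sum_eq1 (T : finType) (A : {pred T}) (a : T) : \sum_(x in A) (a == x : nat) = (a \in A).
Proof.
case aA: (a \in A).
  rewrite (bigD1 a) //= eqxx big1 // => x /andP[_ /negbTE]; by rewrite eq_sym => ->.
rewrite big1 // => x xA; case: eqP => // E; subst; by rewrite xA in aA.
Qed.

Lemma sum_ends (T : finType) (A : {pred T}) (a b : T) :
  \sum_(x in A) ((a == x) + (b == x)) = (a \in A) + (b \in A).
Proof. by rewrite big_split /= !sum_eq1. Qed.

Lemma sum_ge1_eq (I : finType) (A : {pred I}) (f : I -> nat) :
  \sum_(i in A) f i = #|A| -> (forall i, i \in A -> 0 < f i) -> forall i, i \in A -> f i = 1.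
Proof.
move=> hs hp.
have h0 : \sum_(i in A) (f i - 1) = 0.
  have : \sum_(i in A) (f i - 1) + \sum_(i in A) 1 = \sum_(i in A) f i.
    rewrite -big_split /=; apply: eq_bigr => i iA; have := hp i iA; lia.
  rewrite sum1_card hs; lia.
move=> i iA; move/eqP: h0; rewrite sum_nat_eq0 => /forallP /(_ i); rewrite iA /=.
have := hp i iA; lia.
Qed.

Lemma transport (T T' : finType) (e : rel T) (e' : rel T') (h : T -> T') (P : pred T) :
  (forall a b, P a -> e a b -> P b && e' (h a) (h b)) ->
  forall x y, P x -> connect e x y -> P y && connect e' (h x) (h y).
Proof.
move=> He x y Px /connectP[p pth ->]; elim: p x Px pth => [|z p IH] x Px /=.
  by rewrite Px connect0.
move/andP=> [exz pth]; have /andP[Pz e'xz] := He _ _ Px exz.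
have /andP[-> c] := IH z Pz pth; by rewrite (connect_trans (connect1 e'xz) c).
Qed.

Lemma deg_sum (G : mgraph) (w : vert G) : deg w = \sum_(e : edge G) ((src e == w) + (tgt e == w)).
Proof. by rewrite /deg !card_set_sum -big_split. Qed.

Section Gen.
Variable G : mgraph.
Implicit Types (e : edge G) (x y z w : vert G).


Lemma adj_sym : symmetric (@adj G).
Proof.
move=> x y; rewrite /adj /=; apply/existsP/existsP => -[e He]; exists e; by rewrite orbC.
Qed.

Lemma adj_edge e : adj (src e) (tgt e).
Proof. by apply/existsP; exists e; rewrite !eqxx. Qed.

Lemma adj_other x y : adj x y -> x != y -> exists e, incident y e && (other y e == x).
Proof.
move=> /existsP[e /orP[] /andP[/eqP s /eqP t]] ne; exists e; rewrite /incident /other s t eqxx ?orbT //=.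
  by rewrite eq_sym (negbTE ne).
Qed.

Lemma other_inc w x e : incident w e -> x != w -> (other w e == x : nat) = (src e == x) + (tgt e == x).
Proof.
rewrite /incident /other; case: (eqVneq (src e) w) => [->|sw] /=.
  by move=> _ /negbTE; rewrite eq_sym => ->.
by move=> /eqP -> /negbTE; rewrite eq_sym => ->; rewrite addn0.
Qed.

Lemma other_inc' w x e : incident w e -> x != w -> incident x e = (other w e == x).
Proof.
rewrite /incident /other; case: (eqVneq (src e) w) => [->|sw] /=.
  by move=> _ /negbTE; rewrite eq_sym => ->.
by move=> /eqP -> /negbTE; rewrite eq_sym => ->; rewrite orbF.
Qed.

Lemma del_adj_sym w : symmetric (del_adj w).
Proof. by move=> x y; rewrite /del_adj /= adj_sym; case: (x != w); case: (y != w). Qed.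

Lemma tc_of : 3 <= #|vert G| ->
  (forall w x y, x != w -> y != w -> connect (del_adj w) x y) -> two_connected G.
Proof.
move=> h3 hc; split => //; split.
  have /card_gt0P[x _] : 0 < #|vert G| by lia.
  by exists x.
move=> x y; have : #|[set x; y]| < #|vert G| by rewrite cards2; lia.
rewrite -(cardsC [set x; y]) -{1}(addn0 #|[set x; y]|) ltn_add2l => /card_gt0P[w].
rewrite !inE negb_or => /andP[xw yw].
have sub : subrel (del_adj w) (connect (@adj G)).
  by move=> a b /andP[_ ab]; apply: connect1.
by apply: (connect_sub sub); apply: hc; rewrite eq_sym.
Qed.

Definition del2 (a w : vert G) : rel (vert G) :=
  [rel p q | [&& p != a, p != w, q != a, q != w & adj p q]].

Lemma first_hit a w x : x != a -> x != w -> connect (del_adj w) x a ->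
  exists n, [/\ adj n a, n != a, n != w & connect (del2 a w) x n].
Proof.
move=> xa xw /connectP[p pth lst]; elim: p x xa xw pth lst => [|y p IH] x xa xw /=.
  by move=> _ E; rewrite E eqxx in xa.
move=> /andP[/andP[/andP[_ yw] xy] pth] lst.
case: (eqVneq y a) => [E|ya].
  subst y; exists x; split => //; exact: connect0.
have [n [na nna nw c]] := IH y ya yw pth lst.
exists n; split => //; apply: connect_trans c; apply: connect1; by rewrite /del2 /= xa xw ya yw.
Qed.

Section U.
Variable U : {set vert G}.

Lemma radj_sym : symmetric (radj U).
Proof. by move=> x y; rewrite /radj /= adj_sym; case: (x \in U); case: (y \in U). Qed.

Lemma comp_sym : connect_sym (radj U).
Proof. exact: sym_connect_sym radj_sym. Qed.

Lemma mem_comp x : x \notin U -> x \in Defs.comp U x.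
Proof. by move=> xU; rewrite inE xU connect0. Qed.

Lemma comp_notin x y : y \in Defs.comp U x -> y \notin U.
Proof. by rewrite inE => /andP[]. Qed.

Lemma comp_eq x y : y \in Defs.comp U x -> Defs.comp U y = Defs.comp U x.
Proof.
rewrite inE => /andP[yU cxy]; apply/setP => z; rewrite !inE.
by rewrite (same_connect comp_sym cxy).
Qed.

Lemma QP_mem C z : C \in QP U -> z \in C -> C = Defs.comp U z.
Proof. by move=> /imsetP[x _ ->] /comp_eq ->. Qed.

Lemma radj_comp s t : s \notin U -> t \notin U -> adj s t -> t \in Defs.comp U s.
Proof. by move=> sU tU st; rewrite inE tU /=; apply: connect1; rewrite /radj /= sU tU. Qed.

Lemma mem_block z : z \in block_of U z.
Proof. rewrite /block_of; case: ifP => zU; [by rewrite inE | by rewrite mem_comp ?zU]. Qed.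

Lemma block_eq B z : B \in blocks U -> (block_of U z == B) = (z \in B).
Proof.
case/setUP => /imsetP[x xU ->]; apply/eqP/idP => [<-|]; try exact: mem_block.
  by rewrite inE => /eqP ->; rewrite /block_of xU.
by move=> zc; rewrite /block_of (negbTE (comp_notin zc)) (comp_eq zc).
Qed.

Lemma block_SU z : (block_of U z \in SU U) = (z \in U).
Proof.
rewrite /block_of; case: ifP => zU; first by rewrite imset_f.
apply/imsetP => -[x xU E]; have := mem_comp (negbT zU); rewrite E inE => /eqP ex.
by rewrite ex xU in zU.
Qed.

Lemma block_QP z : (block_of U z \in QP U) = (z \notin U).
Proof.
rewrite /block_of; case: ifP => zU /=; last by rewrite imset_f // inE zU.
apply/imsetP => -[x xU E]; have : z \in [set z] by rewrite inE.
by rewrite E => /comp_notin; rewrite zU.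
Qed.

Definition crosse (B : {set vert G}) e : nat :=
  ((src e \in B) && (tgt e \notin B)) + ((tgt e \in B) && (src e \notin B)).
Definition cross B := \sum_e crosse B e.

Lemma deg_contr (B : vert (contraction U)) : deg B = cross (val B).
Proof.
rewrite deg_sum /=.
have E : forall (X Y : cvert U), (X == Y) = (val X == val Y) by [].
transitivity (\sum_(e : cedge U) (fun e => (src e \in val B) + (tgt e \in val B) : nat) (val e)).
  apply: eq_bigr => e _; rewrite !E /= !block_eq //; exact: valP.
etransitivity; first exact: (big_sig_nat (fun e => block_of U (src e) != block_of U (tgt e)) (fun e => (src e \in val B) + (tgt e \in val B))).
rewrite /cross big_mkcond /=; apply: eq_bigr => e _.
rewrite /crosse -!(block_eq _ (valP B)).
case: (eqVneq (block_of U (src e)) (block_of U (tgt e))) => [->|ne] /=.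
  by case: (_ == _).
case: (eqVneq (block_of U (src e)) (val B)) => [E'|] /=.
  by rewrite -E' eq_sym (negbTE ne).
by rewrite andbT.
Qed.

Hypothesis ind : independent U.

Lemma bip : bipartite_parts U.
Proof.
move=> e /=; rewrite !block_SU !block_QP.
have := ind (val e); have := valP e; rewrite /=.
case sU: (src (val e) \in U); case tU: (tgt (val e) \in U) => //= ne _.
have := radj_comp (negbT sU) (negbT tU) (adj_edge (val e)).
move/comp_eq => E; move: ne; by rewrite /block_of sU tU E eqxx.
Qed.

Lemma QP_notin C z : C \in QP U -> z \in C -> z \notin U.
Proof. by move=> CQ zC; have := mem_comp (x:=z); rewrite -(QP_mem CQ zC) => _; move: CQ zC => /imsetP[x _ ->] /comp_notin. Qed.

Lemma QP_memE C z : C \in QP U -> z \notin U -> (z \in C) = (Defs.comp U z == C).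
Proof.
move=> CQ zU; apply/idP/eqP => [zC|<-]; [by rewrite (QP_mem CQ zC) | exact: mem_comp].
Qed.

Lemma comp_QP z : z \notin U -> Defs.comp U z \in QP U.
Proof. by move=> zU; rewrite imset_f // inE. Qed.

Lemma sum_QP_crosse e : \sum_(C in QP U) crosse C e = (src e \in U) + (tgt e \in U).
Proof.
have := ind e.
case sU: (src e \in U); case tU: (tgt e \in U) => //= _.
- transitivity (\sum_(C in QP U) (Defs.comp U (tgt e) == C : nat)).
    apply: eq_bigr => C CQ; rewrite /crosse.
    have -> : (src e \in C) = false by apply/negP => /(QP_notin CQ); rewrite sU.
    by rewrite (QP_memE CQ (negbT tU)) andbT.
  by rewrite sum_eq1 comp_QP ?tU.
- transitivity (\sum_(C in QP U) (Defs.comp U (src e) == C : nat)).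
    apply: eq_bigr => C CQ; rewrite /crosse.
    have -> : (tgt e \in C) = false by apply/negP => /(QP_notin CQ); rewrite tU.
    by rewrite (QP_memE CQ (negbT sU)) andbT addn0.
  by rewrite sum_eq1 comp_QP ?sU.
- apply: big1 => C CQ; rewrite /crosse.
  have st := radj_comp (negbT sU) (negbT tU) (adj_edge e).
  rewrite !(QP_memE CQ) ?sU ?tU // (comp_eq st).
  by case: (_ == _).
Qed.

Lemma sum_QP_cross : \sum_(C in QP U) cross C = \sum_(x in U) deg x.
Proof.
rewrite /cross exchange_big /=.
under [RHS]eq_bigr => x _ do rewrite deg_sum.
rewrite [RHS]exchange_big /=; apply: eq_bigr => e _.
by rewrite sum_QP_crosse sum_ends.
Qed.

Lemma card_QP : cubic G -> (forall C, C \in QP U -> cross C = 3) -> #|QP U| = #|U|.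
Proof.
move=> cub c3.
have : \sum_(C in QP U) cross C = \sum_(x in U) deg x by exact: sum_QP_cross.
rewrite (eq_bigr (fun _ => 3)) // [RHS](eq_bigr (fun _ => 3)) // !sum_nat_const.
lia.
Qed.

Lemma cross1 z : z \in U -> cross [set z] = deg z.
Proof.
move=> zU; rewrite deg_sum /cross; apply: eq_bigr => e _; rewrite /crosse !inE.
have := ind e.
case: (src e =P z) => [->|_]; case: (tgt e =P z) => [->|_] //=; by rewrite zU.
Qed.

End U.

Lemma pm_count M x : perfect_matching M ->
  \sum_(e in M) ((src e == x) + (tgt e == x)) = 1.
Proof.
case=> nl pm; rewrite -(pm x) card_set_sum big_mkcond /=; apply: eq_bigr => e _.
case eM: (e \in M) => //=; rewrite /incident.
have := nl e eM.
by case: (src e =P x) => [->|_]; case: (tgt e =P x) => [->|_] //=; rewrite eqxx.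
Qed.

Lemma ends_split (C : {set vert G}) e :
  (src e \in C) + (tgt e \in C) = 2 * ((src e \in C) && (tgt e \in C)) + crosse C e.
Proof. by rewrite /crosse; case: (src e \in C); case: (tgt e \in C). Qed.

Lemma pm_pos M (C : {set vert G}) : perfect_matching M -> cubic G -> cross C = 3 ->
  0 < \sum_(e in M) crosse C e.
Proof.
move=> pm cub c3.
have h1 : 3 * #|C| = 2 * \sum_e ((src e \in C) && (tgt e \in C)) + 3.
  rewrite -c3 /cross -sum1_card big_distrr /= big_distrr /= -big_split /=.
  transitivity (\sum_(x in C) deg x).
    by apply: eq_bigr => x _; rewrite cub muln1.
  under eq_bigr => x _ do rewrite deg_sum.
  rewrite exchange_big /=; apply: eq_bigr => e _; by rewrite sum_ends ends_split.
have h2 : #|C| = 2 * \sum_(e in M) ((src e \in C) && (tgt e \in C)) + \sum_(e in M) crosse C e.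
  rewrite -sum1_card big_distrr /= -big_split /=.
  transitivity (\sum_(x in C) \sum_(e in M) ((src e == x) + (tgt e == x))).
    by apply: eq_bigr => x _; rewrite pm_count.
  rewrite exchange_big /=; apply: eq_bigr => e _; by rewrite sum_ends ends_split.
rewrite lt0n; apply/negP => /eqP E; rewrite E addn0 in h2; lia.
Qed.

Lemma match_one (U : {set vert G}) M : independent U -> perfect_matching M -> cubic G ->
  (forall C, C \in QP U -> cross C = 3) ->
  forall C, C \in QP U -> \sum_(e in M) crosse C e = 1.
Proof.
move=> ind pm cub c3; apply: sum_ge1_eq; last by move=> C CQ; apply: pm_pos => //; exact: c3.
rewrite exchange_big /= card_QP //.
transitivity (\sum_(e in M) \sum_(x in U) ((src e == x) + (tgt e == x))).
  by apply: eq_bigr => e _; rewrite sum_QP_crosse // sum_ends.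
rewrite exchange_big /= -sum1_card; apply: eq_bigr => x _; exact: pm_count.
Qed.

End Gen.


Lemma eqsig (T : eqType) (P : pred T) (p : T) (pp : P p) (a : {x | P x}) :
  (exist _ p pp == a) = (p == val a).
Proof. by []. Qed.

Lemma geqll (A B : eqType) (a b : A) : (inl a == inl b :> A + B) = (a == b). Proof. by []. Qed.
Lemma geqrr (A B : eqType) (a b : B) : (inr a == inr b :> A + B) = (a == b). Proof. by []. Qed.
Lemma geqlr (A B : eqType) (a : A) (b : B) : (inl a == inr b :> A + B) = false. Proof. by []. Qed.
Lemma geqrl (A B : eqType) (a : A) (b : B) : (inr b == inl a :> A + B) = false. Proof. by []. Qed.

Section Spec.
Variables (H K : mgraph) (U : {set vert K}) (u : vert H) (v : vert K).
Variables (hu : no_loop_at u) (hv : no_loop_at v) (sigma : dang_H u -> dang_K v).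
Hypotheses (tcH : two_connected H) (cubH : cubic H) (tcK : two_connected K)
  (cubK : cubic K) (qb : quasi_bipartite_with U) (vQP : [set v] \in QP U)
  (sbij : bijective sigma).
Hypothesis pmiH : pmi_ge H 5.
Variables (x0 : {x : vert H | x != u}) (y0 : {y : vert K | y != v}).

Local Notation G := (sum3 hu hv sigma).
Local Notation U' := (lift_set_K hu hv sigma U).
Local Notation HS := (H_side hu hv sigma).

Lemma eqll (a b : {x : vert H | x != u}) : (inl a == inl b :> vert G) = (a == b). Proof. by []. Qed.
Lemma eqrr (a b : {x : vert K | x != v}) : (inr a == inr b :> vert G) = (a == b). Proof. by []. Qed.
Lemma eqlr a b : (inl a == inr b :> vert G) = false. Proof. by []. Qed.
Lemma eqrl a b : (inr a == inl b :> vert G) = false. Proof. by []. Qed.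

Lemma seqll (a b : {x : vert H | x != u}) : (inl a == inl b :> sv u v) = (a == b). Proof. by []. Qed.
Lemma seqrr (a b : {x : vert K | x != v}) : (inr a == inr b :> sv u v) = (a == b). Proof. by []. Qed.
Lemma seqlr a b : (inl a == inr b :> sv u v) = false. Proof. by []. Qed.
Lemma seqrl a b : (inr a == inl b :> sv u v) = false. Proof. by []. Qed.

Definition hH (p : vert H) : vert G := inl (insubd x0 p).
Definition hK (p : vert K) : vert G := inr (insubd y0 p).
Arguments hH : simpl never.
Arguments hK : simpl never.

Lemma hH_val a : hH (val a) = inl a. Proof. by rewrite /hH valKd. Qed.
Lemma hK_val a : hK (val a) = inr a. Proof. by rewrite /hK valKd. Qed.

Lemma eq_inl (a : {x : vert H | x != u}) p : p != u -> (inl a == hH p) = (val a == p).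
Proof. by move=> pu; rewrite /hH eqll -val_eqE /= val_insubd pu. Qed.
Lemma eq_inr (a : {x : vert K | x != v}) p : p != v -> (inr a == hK p) = (val a == p).
Proof. by move=> pu; rewrite /hK eqrr -val_eqE /= val_insubd pu. Qed.
Lemma hKnl p c : (hK p == inl c) = false. Proof. by []. Qed.
Lemma hHnr p c : (hH p == inr c) = false. Proof. by []. Qed.
Lemma hH_eq p c : p != u -> (hH p == inl c) = (p == val c).
Proof. by move=> pu; rewrite eq_sym eq_inl // eq_sym. Qed.
Lemma hK_eq p c : p != v -> (hK p == inr c) = (p == val c).
Proof. by move=> pu; rewrite eq_sym eq_inr // eq_sym. Qed.

Lemma indK : independent U. Proof. by case: qb. Qed.

Lemma c3K C : C \in QP U -> cross C = 3.
Proof.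
case: qb => _ _ _ _ [cc _] CQ.
have CB : C \in blocks U by rewrite /blocks inE CQ orbT.
by rewrite -(cc (exist _ C CB)) deg_contr.
Qed.

Lemma vU : v \notin U.
Proof.
have /imsetP[x _ E] := vQP; have : v \in [set v] by rewrite inE.
rewrite E; exact: comp_notin.
Qed.

Lemma compv : Defs.comp U v = [set v].
Proof. by rewrite -(QP_mem vQP (z := v)) // inE. Qed.

Lemma adj_inc (T : mgraph) (w : vert T) e : incident w e -> adj w (other w e).
Proof.
rewrite /incident /other; case: ifP => [/eqP <- _|_ /= /eqP <-]; first exact: adj_edge.
by rewrite adj_sym adj_edge.
Qed.

Lemma nbU f : incident v f -> other v f \in U.
Proof.
move=> inc; apply/negPn/negP => yU.
have := radj_comp vU yU (adj_inc inc); rewrite compv inE.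
by rewrite (negbTE (other_ne hv inc)).
Qed.

Lemma adj_nbU p : adj p v -> p != v -> p \in U.
Proof. by move=> pv ne; have [f /andP[inc /eqP <-]] := adj_other pv ne; exact: nbU. Qed.

Lemma inU'l a : (inl a \in U') = false. Proof. by rewrite inE. Qed.
Lemma inU'r b : (inr b \in U') = (val b \in U). Proof. by rewrite inE. Qed.
Lemma inU'H p : (hH p \in U') = false. Proof. by rewrite inE. Qed.
Lemma inU'K p : p != v -> (hK p \in U') = (p \in U).
Proof. by move=> pv; rewrite /hK inE /= val_insubd pv. Qed.


Lemma adjG_H p q : p != u -> q != u -> adj p q -> adj (hH p) (hH q).
Proof.
move=> pu qu /existsP[e He].
have ne : ~~ incident u e.
  by rewrite /incident; case/orP: He => /andP[/eqP -> /eqP ->]; rewrite (negbTE pu) (negbTE qu).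
apply/existsP; exists (inl (inl (exist _ e ne))); rewrite /=.
by rewrite ![inl _ == hH _]eq_inl.
Qed.

Lemma adjG_K p q : p != v -> q != v -> adj p q -> adj (hK p) (hK q).
Proof.
move=> pu qu /existsP[e He].
have ne : ~~ incident v e.
  by rewrite /incident; case/orP: He => /andP[/eqP -> /eqP ->]; rewrite (negbTE pu) (negbTE qu).
apply/existsP; exists (inl (inr (exist _ e ne))); rewrite /=.
by rewrite ![inr _ == hK _]eq_inr.
Qed.

Lemma adjG_d (d : dang_H u) : adj (hH (other u (val d))) (hK (other v (val (sigma d)))).
Proof.
apply/existsP; exists (inr d); rewrite /= eq_inl ?eq_inr ?eqxx //.
  exact: (other_ne hv (valP (sigma d))).
exact: (other_ne hu (valP d)).
Qed.

Lemma adjG_lr a b : adj (inl a : vert G) (inr b) -> val b \in U.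
Proof.
case/existsP => -[[g|g]|d]; rewrite /= ?eqlr ?eqrl ?eqll ?eqrr ?andbF //= orbF.
move=> /andP[_ /eqP <- /=]; apply: nbU; exact: valP.
Qed.

Lemma adjG_rr a b : adj (inr a : vert G) (inr b) -> adj (val a) (val b).
Proof.
case/existsP => -[[g|g]|d]; rewrite /= ?eqlr ?eqrl ?eqll ?eqrr ?andbF //= !eqsig.
by move=> h; apply/existsP; exists (val g).
Qed.

Lemma radjG_lr a b : radj U' (inl a) (inr b) = false.
Proof.
rewrite /radj /= inU'l inU'r /=; apply/negbTE/negP => /andP[nb ab].
by have := adjG_lr ab; rewrite (negbTE nb).
Qed.

Lemma radjG_rl a b : radj U' (inr b) (inl a) = false.
Proof. by rewrite radj_sym radjG_lr. Qed.


Definition isl (z : vert G) : bool := if z is inl _ then true else false.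
Definition isr (z : vert G) : bool := if z is inr _ then true else false.
Definition projK (z : vert G) : vert K := if z is inr y then val y else v.

Lemma inHS z : (z \in HS) = isl z. Proof. by rewrite inE; case: z. Qed.

Lemma Hside_comp a : Defs.comp U' (inl a) = HS.
Proof.
apply/setP => z; rewrite inHS inE; case: z => [b|b] /=.
  rewrite inU'l /=.
  have [_ _ c] := tcH.
  have := c u (val a) (val b) (valP a) (valP b).
  move/(transport (P := fun p => p != u) (h := hH) (e' := radj U')).
  rewrite !hH_val; case/(_ _ (valP a))/andP => //.
  move=> p q pu /andP[/andP[_ qu] pq]; rewrite qu /radj /= !inU'H /=.
  exact: adjG_H.
apply/negbTE/negP => /andP[_ c].
have He : forall x y, isl x -> radj U' x y -> isl y && radj U' (id x) (id y).
  by case=> [a1|b1] [a2|b2] //= _ h; rewrite ?radjG_lr in h *.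
by have /andP[] := transport He (isT : isl (inl a)) c.
Qed.

Lemma inL C z : (z \in lift_set_K hu hv sigma C) = (if z is inr y then val y \in C else false).
Proof. by rewrite inE. Qed.

Lemma Kcomp b : val b \notin U ->
  Defs.comp U' (inr b) = lift_set_K hu hv sigma (Defs.comp U (val b)).
Proof.
move=> bU; apply/setP => z; rewrite inL inE; case: z => [c|c] /=.
  apply/negbTE/negP => /andP[_ cn].
  have He : forall x y, isr x -> radj U' x y -> isr y && radj U' (id x) (id y).
    by case=> [a1|b1] [a2|b2] //= _ h; rewrite ?radjG_rl in h *.
  by have /andP[] := transport He (isT : isr (inr b)) cn.
rewrite inU'r inE; apply/andP/andP => -[cU cn]; split => //.
  have He : forall x y, isr x -> radj U' x y -> isr y && radj U (projK x) (projK y).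
    case=> [a1|b1] [a2|b2] //= _; rewrite ?radjG_rl //.
    rewrite /radj /= !inU'r => /andP[/andP[-> ->] ab] /=; exact: adjG_rr.
  by have /andP[] := transport He (isT : isr (inr b)) cn.
have He : forall p q, p != v -> radj U p q -> (q != v) && radj U' (hK p) (hK q).
  move=> p q pv /andP[/andP[pU qU] pq].
  have qv : q != v.
    apply/negP => /eqP E; subst q; by rewrite (adj_nbU pq pv) in pU.
  by rewrite qv /radj /= !inU'K // pU qU /= adjG_K.
have /andP[_] := transport He (valP b) cn.
by rewrite !hK_val.
Qed.

Lemma QPeq : QP U' = HS |: [set lift_set_K hu hv sigma C | C in QP U & C != [set v]].
Proof.
apply/setP => B; rewrite in_setU1; apply/imsetP/orP.
  case=> -[a|b] zU ->; first by rewrite Hside_comp eqxx; left.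
  have bU : val b \notin U by rewrite inE inU'r in zU.
  right; rewrite Kcomp //; apply/imsetP; exists (Defs.comp U (val b)) => //.
  rewrite inE comp_QP //=; apply/eqP => E.
  have := mem_comp bU; rewrite E inE => /eqP bv; by have := valP b; rewrite bv eqxx.
case=> [/eqP ->|/imsetP[C]].
  by exists (inl x0); rewrite ?Hside_comp // inE inU'l.
rewrite inE => /andP[/imsetP[y yU ->] ne] ->.
have yv : y != v by apply: contra ne => /eqP ->; rewrite compv.
exists (inr (insubd y0 y)).
  by rewrite inE inU'r val_insubd yv; rewrite inE in yU.
by rewrite Kcomp val_insubd yv // ; rewrite inE in yU.
Qed.

Lemma indG : independent U'.
Proof.
case=> [[g|g]|d] //=; rewrite ?inU'l ?inU'r //=; exact: indK.
Qed.

Lemma cardU' : 2 <= #|U'|.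
Proof.
case: qb => _ _ _ c2 _; apply: (leq_trans c2).
have inj : {in U &, injective hK}.
  move=> p q pU qU E; have pv : p != v by apply: contraNneq vU => <-.
  have qv : q != v by apply: contraNneq vU => <-.
  case: E => /(congr1 val); rewrite !val_insubd pv qv //.
rewrite -(card_in_imset inj); apply: subset_leq_card; apply/subsetP => z /imsetP[p pU ->].
have pv : p != v by apply: contraNneq vU => <-.
by rewrite inU'K.
Qed.

Lemma sum_se (F : edge G -> nat) : \sum_(g : edge G) F g =
  \sum_(a : {e : edge H | ~~ incident u e}) F (inl (inl a)) +
  \sum_(b : {f : edge K | ~~ incident v f}) F (inl (inr b)) +
  \sum_(d : dang_H u) F (inr d).
Proof. by rewrite !big_sumType. Qed.

Lemma degH_split (x : vert H) : x != u ->
  \sum_(a : {e : edge H | ~~ incident u e}) ((src (val a) == x) + (tgt (val a) == x)) +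
  \sum_(d : dang_H u) (other u (val d) == x : nat) = deg x.
Proof.
move=> xu; rewrite deg_sum (bigID (incident u)) /= [RHS]addnC; congr (_ + _).
  exact: (big_sig_nat (fun e => ~~ incident u e) (fun e => (src e == x) + (tgt e == x))).
etransitivity; last exact: (big_sig_nat (fun e => incident u e) (fun e => (src e == x) + (tgt e == x))).
apply: eq_bigr => d _; by rewrite other_inc //; exact: valP.
Qed.

Lemma degK_split (x : vert K) : x != v ->
  \sum_(a : {e : edge K | ~~ incident v e}) ((src (val a) == x) + (tgt (val a) == x)) +
  \sum_(d : dang_K v) (other v (val d) == x : nat) = deg x.
Proof.
move=> xu; rewrite deg_sum (bigID (incident v)) /= [RHS]addnC; congr (_ + _).
  exact: (big_sig_nat (fun e => ~~ incident v e) (fun e => (src e == x) + (tgt e == x))).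
etransitivity; last exact: (big_sig_nat (fun e => incident v e) (fun e => (src e == x) + (tgt e == x))).
apply: eq_bigr => d _; by rewrite other_inc //; exact: valP.
Qed.

Lemma cubG : cubic G.
Proof.
case=> [a|b]; rewrite deg_sum sum_se /=.
  rewrite [X in _ + X + _]big1 ?addn0 //.
  rewrite -(cubH (val a)) -degH_split; last exact: (valP a).
  congr (_ + _); apply: eq_bigr => d _; exact: addn0.
rewrite [X in X + _ + _]big1 ?add0n //.
rewrite -(cubK (val b)) -degK_split; last exact: (valP b).
congr (_ + _).
rewrite (reindex sigma); last exact: onW_bij.
apply: eq_bigr => d _; exact: add0n.
Qed.

Lemma card_dang : \sum_(d : dang_H u) 1 = 3.
Proof.
rewrite -(cubH u) deg_sum.
transitivity (\sum_(e | incident u e) 1); first exact: (big_sig_nat (fun e => incident u e) (fun _ => 1)).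
rewrite big_mkcond /=; apply: eq_bigr => e _; have := hu e; rewrite /incident.
by case: (src e == u); case: (tgt e == u).
Qed.

Lemma cross_HS : cross HS = 3.
Proof.
rewrite /cross sum_se big1 ?add0n; last by move=> a _; rewrite /crosse !inHS.
rewrite big1 ?add0n; last by move=> a _; rewrite /crosse !inHS.
rewrite -card_dang; apply: eq_bigr => d _; by rewrite /crosse !inHS.
Qed.

Lemma cross_lift C : C \in QP U -> C != [set v] -> cross (lift_set_K hu hv sigma C) = 3.
Proof.
move=> CQ ne.
have vC : v \notin C by apply: contra ne => vC; rewrite (QP_mem CQ vC) compv.
have incC : forall f, incident v f -> (src f \notin C) && (tgt f \notin C).
  move=> f inc; have oU := nbU inc; have oC : other v f \notin C.
    by apply/negP => /(QP_notin CQ); rewrite oU.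
  move: oC; rewrite /other; move: inc; rewrite /incident.
  case: (eqVneq (src f) v) => [->|sv] /=; first by move=> _ ->; rewrite vC.
  by move=> /eqP tv sC; rewrite sC tv vC.
rewrite /cross sum_se big1 ?add0n; last by move=> a _; rewrite /crosse !inL.
rewrite [X in _ + X]big1 ?addn0; last first.
  move=> d _; rewrite /crosse !inL /=.
  have : other v (val (sigma d)) \notin C.
    by apply/negP => /(QP_notin CQ); rewrite nbU //; exact: valP.
  by move/negbTE => ->.
rewrite -(c3K CQ) /cross [RHS](bigID (incident v)) /= [X in _ = X + _]big1 ?add0n; last first.
  move=> f inc; have /andP[/negbTE sC /negbTE tC] := incC f inc.
  by rewrite /crosse sC tC.
etransitivity; last exact: (big_sig_nat (fun f => ~~ incident v f) (fun f => crosse C f)).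
apply: eq_bigr => b _; by rewrite /crosse !inL.
Qed.

Lemma c3G : forall B : vert (contraction U'), deg B = 3.
Proof.
move=> B; rewrite deg_contr; case: B => X /=; rewrite /blocks inE => /orP[].
  case/imsetP => z zU ->; rewrite (cross1 indG zU); exact: cubG.
rewrite QPeq in_setU1 => /orP[/eqP ->|]; first exact: cross_HS.
case/imsetP => C; rewrite inE => /andP[CQ ne] ->; exact: cross_lift.
Qed.

Lemma c3QP C : C \in QP U' -> cross C = 3.
Proof.
move=> CQ; have CB : C \in blocks U' by rewrite /blocks inE CQ orbT.
by rewrite -(c3G (exist _ C CB)) deg_contr.
Qed.

Lemma cardG : 3 <= #|vert G|.
Proof.
case: tcH => h3 _ _; case: tcK => k3 _ _.
have e1 : #|{: {x : vert H | x != u}}| = #|vert H|.-1 by rewrite card_sig cardC1.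
have e2 : #|{: {x : vert K | x != v}}| = #|vert K|.-1 by rewrite card_sig cardC1.
have e3 : #|vert G| = #|{: {x : vert H | x != u}}| + #|{: {x : vert K | x != v}}|.
  exact: card_sum.
lia.
Qed.

Lemma Hall w0 a : connect (del_adj (inr w0 : vert G)) (inl a) (inl x0).
Proof.
have [_ _ c] := tcH; have := c u (val a) (val x0) (valP a) (valP x0).
move/(transport (P := fun p => p != u) (h := hH) (e' := del_adj (inr w0 : vert G))).
rewrite !hH_val; case/(_ _ (valP a))/andP => //.
move=> p q pu /andP[/andP[_ qu] pq]; rewrite qu /del_adj /= ?hHnr /=.
exact: adjG_H.
Qed.

Lemma Kall w0 b : connect (del_adj (inl w0 : vert G)) (inr b) (inr y0).
Proof.
have [_ _ c] := tcK; have := c v (val b) (val y0) (valP b) (valP y0).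
move/(transport (P := fun p => p != v) (h := hK) (e' := del_adj (inl w0 : vert G))).
rewrite !hK_val; case/(_ _ (valP b))/andP => //.
move=> p q pu /andP[/andP[_ qu] pq]; rewrite qu /del_adj /= ?hKnl /=.
exact: adjG_K.
Qed.

Lemma Hside w0 a : val a != val w0 -> connect (del_adj (inl w0 : vert G)) (inl a) (inr y0).
Proof.
move=> aw; have [_ _ c] := tcH.
have wu : u != val w0 by rewrite eq_sym (valP w0).
have [n [nu nnu nw cn]] := first_hit (valP a) aw (c _ _ _ aw wu).
have He : forall p q, (p != u) && (p != val w0) -> del2 u (val w0) p q ->
    ((q != u) && (q != val w0)) && del_adj (inl w0 : vert G) (hH p) (hH q).
  move=> p q /andP[pu pw] /and5P[_ _ qu qw pq]; rewrite qu qw /del_adj /= !hH_eq //.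
  by rewrite pw qw adjG_H.
have Px : (val a != u) && (val a != val w0) by rewrite (valP a) aw.
have /andP[_] := transport He Px cn.
rewrite hH_val => c1; apply: (connect_trans c1).
have [e /andP[inc /eqP oe]] := adj_other nu nnu.
have := adjG_d (exist _ e inc); rewrite /= oe => a2.
set m := other v _ in a2.
apply: (@connect_trans _ _ (hK m)); last by rewrite /hK; exact: Kall.
apply: connect1; by rewrite /del_adj /= hH_eq // nw ?hKnl a2.
Qed.

Lemma Kside w0 b : val b != val w0 -> connect (del_adj (inr w0 : vert G)) (inr b) (inl x0).
Proof.
move=> aw; have [_ _ c] := tcK.
have wu : v != val w0 by rewrite eq_sym (valP w0).
have [n [nu nnu nw cn]] := first_hit (valP b) aw (c _ _ _ aw wu).
have He : forall p q, (p != v) && (p != val w0) -> del2 v (val w0) p q ->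
    ((q != v) && (q != val w0)) && del_adj (inr w0 : vert G) (hK p) (hK q).
  move=> p q /andP[pu pw] /and5P[_ _ qu qw pq]; rewrite qu qw /del_adj /= !hK_eq //.
  by rewrite pw qw adjG_K.
have Px : (val b != v) && (val b != val w0) by rewrite (valP b) aw.
have /andP[_] := transport He Px cn.
rewrite hK_val => c1; apply: (connect_trans c1).
have [f /andP[inc /eqP oe]] := adj_other nu nnu.
case: sbij => sinv _ s2.
have := adjG_d (sinv (exist _ f inc)); rewrite s2 /= oe adj_sym => a2.
set m := other u _ in a2.
apply: (@connect_trans _ _ (hH m)); last by rewrite /hH; exact: Hall.
apply: connect1; by rewrite /del_adj /= hK_eq // nw ?hHnr a2.
Qed.

Lemma tcG : two_connected G.
Proof.
apply: tc_of; first exact: cardG.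
move=> w x y xw yw.
have to_hub : forall (w' z : vert G), z != w' ->
    connect (del_adj w') z (if w' is inl _ then inr y0 else inl x0).
  case=> [w0|w0] [a|b] zw /=.
  - by apply: Hside; rewrite eqll -val_eqE in zw.
  - exact: Kall.
  - exact: Hall.
  - by apply: Kside; rewrite eqrr -val_eqE in zw.
apply: connect_trans (to_hub w x xw) _.
by rewrite (sym_connect_sym (del_adj_sym w)) to_hub.
Qed.

Definition MH (M : {set edge G}) : {set edge H} :=
  [set e | [exists d : dang_H u, (val d == e) && ((inr d : edge G) \in M)] ||
           [exists a : {e : edge H | ~~ incident u e}, (val a == e) && ((inl (inl a) : edge G) \in M)]].

Lemma MH_d M d : (val d \in MH M) = ((inr d : edge G) \in M).
Proof.
rewrite inE; apply/orP/idP => [[/existsP[d' /andP[/eqP E dM]] | /existsP[a /andP[/eqP E _]]] | dM].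
- by rewrite -(val_inj E).
- by have := valP a; rewrite E (valP d).
- by left; apply/existsP; exists d; rewrite eqxx.
Qed.

Lemma MH_a M a : (val a \in MH M) = ((inl (inl a) : edge G) \in M).
Proof.
rewrite inE; apply/orP/idP => [[/existsP[d /andP[/eqP E _]] | /existsP[a' /andP[/eqP E dM]]] | dM].
- by have := valP a; rewrite -E (valP d).
- by rewrite -(val_inj E).
- by right; apply/existsP; exists a; rewrite eqxx.
Qed.

Lemma HSQ : HS \in QP U'.
Proof. by rewrite QPeq setU11. Qed.

Lemma pm_H M : perfect_matching M -> perfect_matching (MH M).
Proof.
move=> pmM; case: (pmM) => nl pm; split.
  move=> e; rewrite inE => /orP[/existsP[d /andP[/eqP <- _]] | /existsP[a /andP[/eqP <- aM]]].
    apply/negP => /eqP E; move: (hu (val d)) (valP d); rewrite /incident E.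
    by case: (tgt (val d) == u).
  have := nl _ aM; apply: contra => /eqP E; apply/eqP => /=; congr inl; exact: val_inj.
move=> x; rewrite card_set_sum.
case: (eqVneq x u) => [->|xu].
  rewrite (bigID (incident u)) /= [X in _ + X]big1 ?addn0; last first.
    by move=> e /negbTE ->; rewrite andbF.
  transitivity (\sum_(e | incident u e) (e \in MH M : nat)).
    by apply: eq_bigr => e ->; rewrite andbT.
  transitivity (\sum_(d : dang_H u) (val d \in MH M : nat)).
    by symmetry; exact: (big_sig_nat (fun e => incident u e) (fun e => (e \in MH M) : nat)).
  under eq_bigr => d _ do rewrite MH_d.
  rewrite -(match_one indG pmM cubG c3QP HSQ) [RHS]big_mkcond [RHS]sum_se.
  rewrite [X in _ = X + _ + _]big1 ?add0n; last by move=> a _; rewrite /crosse !inHS; case: ifP.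
  rewrite [X in _ = X + _]big1 ?add0n; last by move=> a _; rewrite /crosse !inHS; case: ifP.
  by apply: eq_bigr => d _; rewrite /crosse !inHS /=; case: ifP.
pose a0 : {x : vert H | x != u} := exist _ x xu.
have := pm (inl a0); rewrite card_set_sum sum_se [X in _ + X + _]big1 ?addn0; last first.
  by move=> b _; case: (_ \in M).
move=> <-; rewrite (bigID (incident u)) /= [RHS]addnC; congr (_ + _).
  etransitivity; first exact: (esym (big_sig_nat (fun e => incident u e) (fun e => (e \in MH M) && incident x e))).
  apply: eq_bigr => d _; rewrite MH_d (other_inc' (valP d) xu).
  by rewrite /incident /= orbF.
etransitivity; first exact: (esym (big_sig_nat (fun e => ~~ incident u e) (fun e => (e \in MH M) && incident x e))).
by apply: eq_bigr => a' _; rewrite MH_a.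
Qed.

Lemma pmiG : pmi_ge G 5.
Proof.
move=> k Ms pmMs cov; apply: (pmiH (fun i => pm_H (pmMs i))).
move=> e; case: (boolP (incident u e)) => h.
  have [i Hi] := cov (inr (exist _ e h)); exists i.
  by rewrite -[e]/(val (exist _ e h : dang_H u)) MH_d.
have [i Hi] := cov (inl (inl (exist _ e h))); exists i.
by rewrite -[e]/(val (exist _ e h : {e : edge H | ~~ incident u e})) MH_a.
Qed.

Lemma main_spec :
  pmi_ge G 5 /\ quasi_bipartite_with U' /\
  QP U' = HS |: [set lift_set_K hu hv sigma C | C in QP U & C != [set v]].
Proof.
split; first exact: pmiG.
split; last exact: QPeq.
split; [exact: tcG | exact: cubG | exact: indG | exact: cardU' | split].
  exact: c3G.
exact: bip indG.
Qed.

End Spec.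

Theorem theorem6p8
  (H K : mgraph) (U : {set vert K}) (u : vert H) (v : vert K)
  (hu : no_loop_at u) (hv : no_loop_at v)
  (sigma : dang_H u -> dang_K v) :
  snark H -> pmi_ge H 5 ->
  two_connected K -> cubic K -> three_edge_colourable K ->
  quasi_bipartite_with U ->
  [set v] \in QP U ->
  bijective sigma ->
  pmi_ge (sum3 hu hv sigma) 5 /\
  quasi_bipartite_with (lift_set_K hu hv sigma U) /\
  QP (lift_set_K hu hv sigma U) =
    H_side hu hv sigma
      |: [set lift_set_K hu hv sigma C | C in QP U & C != [set v]].
Proof.
move=> [tcH cubH _] pmiH tcK cubK _ qb vQP sbij.
have [x xu] : exists x : vert H, x != u.
  have : #|[set u]| < #|vert H| by rewrite cards1; case: tcH => h _ _; lia.
  rewrite -(cardsC [set u]) -{1}(addn0 #|[set u]|) ltn_add2l => /card_gt0P[x].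
  by rewrite !inE => xu; exists x.
have [y yv] : exists y : vert K, y != v.
  have : #|[set v]| < #|vert K| by rewrite cards1; case: tcK => h _ _; lia.
  rewrite -(cardsC [set v]) -{1}(addn0 #|[set v]|) ltn_add2l => /card_gt0P[y].
  by rewrite !inE => yv; exists y.
exact: (main_spec hu hv tcH cubH tcK cubK qb vQP sbij pmiH (exist _ x xu) (exist _ y yv)).
Qed.
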